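(* Consider the job set $J$ described in the context with $n\ge2$ and $p_\ell$ sufficiently large. Let $\sigma=(M_1,M_2)$ be a schedule of $J$ with $\omega_1(\sigma)=1$, $\omega_2(\sigma)=0$ and $\ell\in M_1$. Then $\sigma$ can be improved, by a sequence of improving 3-swaps, to a schedule with $\omega_1=0$ and $\omega_2=1$.
   Context: Two identical machines; a schedule $\sigma=(M_1,M_2)$ partitions the jobs into sets processed on machines 1 and 2, with loads $L_i=\sum_{j\in M_i}p_j$ and makespan $\max_iL_i$. Fix $n$ and the job set $J=\{a_i,b_i,c_i:1\le i\le n\}\cup\{\ell\}$ with $p_{a_i}=2^{n+i+1}+2^{i-1}$, $p_{b_i}=2^{n+i}$, $p_{c_i}=2^{n+i-1}+2^{i-1}$, and $p_\ell$ a sufficiently large number. For each $i$ define $\omega_i(\sigma)=0$ if $a_i\in M_1$ and $b_i,c_i\in M_2$; $\omega_i(\sigma)=1$ if $a_i\in M_2$ and $b_i,c_i\in M_1$; and $\omega_i(\sigma)=-1$ otherwise. A 3-swap interchanges the machine assignments of exactly three jobs (some on each machine); it is improving if the makespan strictly decreases. *)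

(* Defs.v *)
From mathcomp Require Import all_boot all_order all_algebra.
Set Implicit Arguments. Unset Strict Implicit. Unset Printing Implicit Defensive.

(* Jobs of the instance J: [Some (k, t)] with k : 'I_n stands for the job
   with (1-based) index i = k+1 of kind t (t = 0 : a_i, t = 1 : b_i,
   t = 2 : c_i); [None] is the long job l. *)
Definition job (n : nat) : finType := option ('I_n * 'I_3).

Definition ja {n} (k : 'I_n) : job n := Some (k, 0%R).
Definition jb {n} (k : 'I_n) : job n := Some (k, inord 1).
Definition jc {n} (k : 'I_n) : job n := Some (k, inord 2).
Definition jl {n} : job n := None.

Definition ptime (n pl : nat) (j : job n) : nat :=
  match j with
  | None => pl
  | Some (k, t) =>
      let i := k.+1 in
      if val t == 0 then 2 ^ (n + i + 1) + 2 ^ (i - 1)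
      else if val t == 1 then 2 ^ (n + i)
      else 2 ^ (n + i - 1) + 2 ^ (i - 1)
  end.

(* A schedule is represented by the set M1 of jobs on machine 1;
   machine 2 gets the complement M2 = ~: M1. *)
Definition schedule (n : nat) := {set job n}.

Definition load1 (n pl : nat) (M1 : schedule n) : nat :=
  \sum_(j in M1) ptime pl j.
Definition load2 (n pl : nat) (M1 : schedule n) : nat :=
  \sum_(j in ~: M1) ptime pl j.
Definition makespan (n pl : nat) (M1 : schedule n) : nat :=
  maxn (load1 pl M1) (load2 pl M1).

Definition omega (n : nat) (M1 : schedule n) (k : 'I_n) : int :=
  if [&& ja k \in M1, jb k \notin M1 & jc k \notin M1] then 0%R
  else if [&& ja k \notin M1, jb k \in M1 & jc k \in M1] then 1%R
  else (-1)%R.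

Definition three_swap (n : nat) (M1 M1' : schedule n) : Prop :=
  exists S : {set job n},
    [/\ #|S| = 3, S :&: M1 != set0, S :\: M1 != set0 &
        M1' = (M1 :\: S) :|: (S :\: M1)].

Definition improving_three_swap (n pl : nat) (M1 M1' : schedule n) : Prop :=
  three_swap M1 M1' /\ makespan pl M1' < makespan pl M1.

Inductive improves_to (n pl : nat) : schedule n -> schedule n -> Prop :=
| improves_refl M : improves_to pl M M
| improves_step M M' M'' :
    improving_three_swap pl M M' -> improves_to pl M' M'' ->
    improves_to pl M M''.

(* omega_i for a 1-based index i (1 <= i <= n); out-of-range indices,
   which are never used, get the value -1. *)
Definition omega_at (n : nat) (M1 : schedule n) (i : nat) : int :=
  if @insub nat (fun m => m < n) 'I_n i.-1 is Some k then omega M1 k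
  else (-1)%R.

(* Main.v *)
Require Import Defs.
From mathcomp Require Import all_boot all_order all_algebra.
From mathcomp Require Import zify.
Set Implicit Arguments. Unset Strict Implicit. Unset Printing Implicit Defensive.

Lemma i1 : nat_of_ord (inord 1 : 'I_3) = 1%N. Proof. exact: (@inordK 2 1). Qed.
Lemma i2 : nat_of_ord (inord 2 : 'I_3) = 2%N. Proof. exact: (@inordK 2 2). Qed.

Lemma pa n pl (k : 'I_n) : ptime pl (ja k) = (2^(n+k.+1+1) + 2^(k.+1-1))%N.
Proof. by rewrite /ptime /=. Qed.
Lemma pb n pl (k : 'I_n) : ptime pl (jb k) = (2^(n+k.+1))%N.
Proof. by rewrite /ptime /jb /= i1. Qed.
Lemma pc n pl (k : 'I_n) : ptime pl (jc k) = (2^(n+k.+1-1) + 2^(k.+1-1))%N.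
Proof. by rewrite /ptime /jc /= i2. Qed.

Definition kind n (j : job n) : nat := if j is Some (_, t) then val t else 3.
Definition idx n (j : job n) : nat := if j is Some (k, _) then val k else 0.

Lemma neq_kind n (j j' : job n) : kind j != kind j' -> (j == j') = false.
Proof. by apply: contraNF => /eqP->. Qed.
Lemma neq_idx n (j j' : job n) : idx j != idx j' -> (j == j') = false.
Proof. by apply: contraNF => /eqP->. Qed.

Lemma ka n (k : 'I_n) : kind (ja k) = 0%N. Proof. by []. Qed.
Lemma kb n (k : 'I_n) : kind (jb k) = 1%N. Proof. by rewrite /kind /= i1. Qed.
Lemma kc n (k : 'I_n) : kind (jc k) = 2%N. Proof. by rewrite /kind /= i2. Qed.
Lemma kl n : kind (@jl n) = 3%N. Proof. by []. Qed.

Lemma omega_atE n (M : schedule n) (k : 'I_n) : omega_at M k.+1 = omega M k.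
Proof.
rewrite /omega_at /=; case: insubP => [k' _ hk|]; last by rewrite ltn_ord.
by congr omega; apply: val_inj.
Qed.

Lemma load_add n pl (M : schedule n) x :
  x \notin M -> load1 pl (x |: M) = (ptime pl x + load1 pl M)%N.
Proof. by move=> h; rewrite /load1 big_setU1. Qed.
Lemma load_del n pl (M : schedule n) x :
  x \in M -> load1 pl M = (ptime pl x + load1 pl (M :\ x))%N.
Proof. by move=> h; rewrite /load1 (big_setD1 x). Qed.

Definition Q n : nat := \sum_(j in ~: [set (@jl n)]) ptime 0 j.

Lemma makespanE n pl (M : schedule n) :
  (Q n < pl)%N -> jl \in M -> makespan pl M = load1 pl M.
Proof.
move=> hQ hl; rewrite /makespan; apply/maxn_idPl.
have h1 : (pl <= load1 pl M)%N by rewrite (load_del _ hl) leq_addr.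
have h2 : (load2 pl M <= Q n)%N.
  rewrite /load2 /Q.
  have -> : \sum_(j in ~: [set (@jl n)]) ptime 0 j =
            \sum_(j in ~: [set (@jl n)]) ptime pl j.
    apply: eq_bigr => j; rewrite !inE; by case: j.
  rewrite [X in (_ <= X)%N](big_setID (~: M)) /=.
  have -> : ~: [set (@jl n)] :&: ~: M = ~: M.
    apply/setP => j; rewrite !inE; case: eqP => // ->; by rewrite hl.
  exact: leq_addr.
lia.
Qed.

Lemma jeq n (j j' : job n) : (j == j') = (kind j == kind j') && (idx j == idx j').
Proof.
apply/eqP/andP => [->//|[]].
case: j => [[k t]|]; case: j' => [[k' t']|] //= /eqP e1 /eqP e2.
- by congr Some; congr pair; apply: val_inj.
- by move: (ltn_ord t); rewrite e1.
- by move: (ltn_ord t'); rewrite -e1.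
Qed.

Ltac arith := rewrite ?expnS ?expn0 ?expn1; lia.

Section Vals.
Variables (n : nat) (hn : (1 < n)%N) (pl : nat).
Let k0 : 'I_n := Ordinal (ltnW hn).
Let k1 : 'I_n := Ordinal hn.
Lemma va0 : ptime pl (ja k0) = (4 * 2^n + 1)%N.
Proof. rewrite pa /= -!addnA expnD /=; arith. Qed.
Lemma vb0 : ptime pl (jb k0) = (2 * 2^n)%N.
Proof. rewrite pb /= expnD /=; arith. Qed.
Lemma vc0 : ptime pl (jc k0) = (2^n + 1)%N.
Proof. rewrite pc /= addn1 subn1 /=; arith. Qed.
Lemma va1 : ptime pl (ja k1) = (8 * 2^n + 2)%N.
Proof. rewrite pa /= -!addnA expnD /=; arith. Qed.
Lemma vb1 : ptime pl (jb k1) = (4 * 2^n)%N.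
Proof. rewrite pb /= expnD /=; arith. Qed.
Lemma vc1 : ptime pl (jc k1) = (2 * 2^n + 2)%N.
Proof. rewrite pc /= addnS subn1 /= expnD /=; arith. Qed.
End Vals.

Ltac jsimp := rewrite ?jeq ?ka ?kb ?kc ?kl /=.

Ltac sc F j x y z u v w := rewrite !inE;
  (case: (eqVneq j x) => [->|/negbTE ?]; [rewrite ?F; jsimp; by rewrite ?F |]);
  (case: (eqVneq j y) => [->|/negbTE ?]; [rewrite ?F; jsimp; by rewrite ?F |]);
  (case: (eqVneq j z) => [->|/negbTE ?]; [rewrite ?F; jsimp; by rewrite ?F |]);
  (case: (eqVneq j u) => [->|/negbTE ?]; [rewrite ?F; jsimp; by rewrite ?F |]);
  (case: (eqVneq j v) => [->|/negbTE ?]; [rewrite ?F; jsimp; by rewrite ?F |]);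
  (case: (eqVneq j w) => [->|/negbTE ?]; [rewrite ?F; jsimp; by rewrite ?F |]);
  repeat match goal with H : (?a == ?b) = false |- context[?a == ?b] => rewrite H end;
  rewrite /=; by case: (j \in _).

Ltac memt F := rewrite !inE ?F; jsimp; by rewrite ?F.

Theorem lemma8 (n : nat) (hn : 2 <= n) :
  exists P : nat, forall pl : nat, P <= pl ->
  forall M1 : schedule n,
    omega_at M1 1 = 1%R -> omega_at M1 2 = 0%R -> jl \in M1 ->
    exists M1' : schedule n,
      [/\ improves_to pl M1 M1', omega_at M1' 1 = 0%R
        & omega_at M1' 2 = 1%R].
Proof.
exists (Q n).+1 => pl hpl M1 H1 H2 hl.
have E0 : omega_at M1 1 = omega M1 (Ordinal (ltnW hn)) := omega_atE M1 (Ordinal (ltnW hn)).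
have E1 : omega_at M1 2 = omega M1 (Ordinal hn) := omega_atE M1 (Ordinal hn).
move: H1; rewrite E0 /omega; case: ifP => [_ //|_].
case: ifP => [/and3P[a0 b0 c0] _|_ //].
move: H2; rewrite E1 /omega; case: ifP => [/and3P[a1 b1 c1] _|_ //]; last first.
  by case: ifP.
have a0' := negbTE a0. have b1' := negbTE b1. have c1' := negbTE c1.
have F := (a0', b0, c0, a1, b1', c1', hl).
pose k0 : 'I_n := Ordinal (ltnW hn).
pose k1 : 'I_n := Ordinal hn.
pose S1 := [set ja k1; ja k0; jb k1].
pose M2 := jb k1 |: (ja k0 |: (M1 :\ ja k1)).
pose S2 := [set jb k0; jc k0; jc k1].
pose M3 := jc k1 |: ((M2 :\ jb k0) :\ jc k0).
have p2 : 2 ^ 2 <= 2 ^ n by rewrite leq_exp2l.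
exists M3; split.
- apply: (@improves_step _ _ _ M2).
    split.
      exists S1; split.
      + rewrite /S1. rewrite -setUA !cardsU1 cards1 !inE; jsimp; done.
      + apply/set0Pn; exists (ja k1); memt F.
      + apply/set0Pn; exists (ja k0); memt F.
      + rewrite /M2 /S1; apply/setP => j; sc F j (ja k1) (ja k0) (jb k1) (jb k0) (jc k0) (jc k1).
    rewrite !makespanE //; try by rewrite /M3 /M2; memt F.
    rewrite /M2 (load_del pl a1) !load_add; last 2 first.
    + by memt F.
    + by memt F.
    rewrite va0 va1 vb1. try rewrite -/k1; try rewrite -/k0; arith.
  apply: (@improves_step _ _ _ M3); last exact: improves_refl.
  split.
    exists S2; split.
    + rewrite /S2 -setUA !cardsU1 cards1 !inE; jsimp; done.
    + apply/set0Pn; exists (jb k0); rewrite /M2; memt F.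
    + apply/set0Pn; exists (jc k1); rewrite /M2; memt F.
    + rewrite /M3 /M2 /S2; apply/setP => j; sc F j (ja k1) (ja k0) (jb k1) (jb k0) (jc k0) (jc k1).
  have m1 : jb k0 \in M2 by rewrite /M2; memt F.
  have m2 : jc k0 \in M2 :\ jb k0 by rewrite /M2; memt F.
  rewrite !makespanE //; try by rewrite /M3 /M2; memt F.
  rewrite /M3 (load_del pl m1) (load_del pl m2) load_add; last by rewrite /M2; memt F.
  rewrite vb0 vc0 vc1. try rewrite -/k1; try rewrite -/k0; arith.
- have -> : omega_at M3 1 = omega M3 k0 := omega_atE M3 k0.
  rewrite /omega /M3 /M2; rewrite !inE ?F; jsimp; by rewrite ?F.
- have -> : omega_at M3 2 = omega M3 k1 := omega_atE M3 k1.
  rewrite /omega /M3 /M2; rewrite !inE ?F; jsimp; by rewrite ?F.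
Qed.
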